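(* Suppose Assumptions A1 and A2 hold. Then for any integers $n_1\ge n_2\ge0$, the delay $\tau_{n_1}$ is independent of the channel inputs $u(n_1)$ and $u(n_2)$.
   Context: Setting. Fix $\bar\tau\ge1$ and $\mathcal{D}=\{0,\dots,\bar\tau\}$. A networked feedback system has a SISO discrete-time LTI plant $P$ with strictly proper transfer function and a SISO discrete-time LTI controller $K$ with proper transfer function. Both are relaxed (at rest) at time $0$, and all signals are zero at negative times. The plant input is $v(k)+u_d(k)$, where $v$ is the external input. The plant output is $y$, and the controller output $u=Ky$ is the channel input. The receiver output is $$u_d(k)=\sum_{i=0}^{\bar\tau}\alpha_i\delta(\tau_{k-i}-i)u(k-i),$$ with fixed real weights $\alpha_i$ and Kronecker delta $\delta$. Assumptions. - A1: $\{\tau_k\}_{k\ge0}$ is i.i.d. on $\mathcal{D}$ with $\Pr\{\tau_k=i\}=p_i$, $\sum_ip_i=1$. - A2: the input sequence $\{v(k)\}$ is independent of $\{\tau_k\}$. *)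

(* Defs.v *)
From HB Require Import structures.
From mathcomp Require Import all_boot all_order all_algebra.
From mathcomp Require Import all_classical all_reals all_analysis.
Set Implicit Arguments. Unset Strict Implicit. Unset Printing Implicit Defensive.
Import Order.TTheory GRing.Theory Num.Theory.
Local Open Scope classical_set_scope.
Local Open Scope ring_scope.

Definition sig_ext (R : realType) (s : nat -> R) (t : int) : R :=
  match t with Posz m => s m | Negz _ => 0 end.

(* Input/output relation of a relaxed SISO discrete-time LTI system with
   transfer function N(z)/D(z), D monic, size N <= size D (proper):
   the difference equation  sum_i D_i y(k-n+i) = sum_i N_i w(k-n+i),
   n = deg D, with all signals zero at negative times. *)
Definition lti_io (R : realType) (N D : {poly R}) (w y : nat -> R) : Prop :=
  forall k : nat,
    \sum_(i < size D) D`_i * sig_ext y (k%:Z - ((size D).-1)%:Z + i%:Z)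
    = \sum_(i < size D) N`_i * sig_ext w (k%:Z - ((size D).-1)%:Z + i%:Z).

Definition proper_tf (R : realType) (N D : {poly R}) : Prop :=
  D \is monic /\ (size N <= size D)%N.
Definition strictly_proper_tf (R : realType) (N D : {poly R}) : Prop :=
  D \is monic /\ (size N < size D)%N.

Definition receiver_out (R : realType) (taubar : nat) (alpha : nat -> R)
  (tau : nat -> nat) (u : nat -> R) (k : nat) : R :=
  \sum_(i < taubar.+1 | (i <= k)%N)
     alpha i * (tau (k - i)%N == i)%:R * u (k - i)%N.

Definition sigma_rv d d' (T : measurableType d) (V : measurableType d')
  (I : Type) (X : I -> T -> V) : set_system T :=
  <<s [set E | exists i B, measurable B /\ E = X i @^-1` B] >>.

Definition indep_sets d (T : measurableType d) (R : realType)
  (P : probability T R) (G1 G2 : set_system T) : Prop :=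
  forall E F, G1 E -> G2 F -> P (E `&` F) = (P E * P F)%E.

(* A1: {tau_k} i.i.d. on {0..taubar} with Pr{tau_k = i} = p_i:
   tau_k takes values in {0,...,taubar}, the events are measurable, and for
   every finite set of distinct times s and values f, the joint probability
   factorizes: P(cap_{k in s} {tau_k = f k}) = prod_{k in s} p_{f k}. *)
Definition iid_delays d (T : measurableType d) (R : realType)
  (P : probability T R) (taubar : nat) (p : nat -> R) (tau : nat -> T -> nat) : Prop :=
  (forall k w, (tau k w <= taubar)%N) /\
  (forall k i, measurable [set w | tau k w = i]) /\
  (forall (s : seq nat) (f : nat -> nat), uniq s ->
     (forall k, (f k <= taubar)%N) ->
     P (\bigcap_(k in [set k | k \in s]) [set w | tau k w = f k])
     = (\prod_(k <- s) p (f k))%:E).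

(* Main.v *)
Require Import Defs.
From HB Require Import structures.
From mathcomp Require Import all_boot all_order all_algebra.
From mathcomp Require Import all_classical all_reals all_analysis.
From mathcomp Require Import measurable_realfun.
From mathcomp Require Import zify.
Import Order.TTheory GRing.Theory Num.Theory.
Local Open Scope classical_set_scope.
Local Open Scope ring_scope.

Section S.
Variables (R : realType) (d : measure_display) (Omega : measurableType d).
Variables (taubar n1 : nat) (tau : nat -> Omega -> nat) (v : nat -> Omega -> R).

Let Gv : set (set Omega) := [set E | exists i B, measurable B /\ E = v i @^-1` B].
Let Vt := g_sigma_algebraType Gv.

Definition Cf (f : {ffun 'I_n1 -> 'I_taubar.+1}) : set Omega :=
  [set w | forall k : 'I_n1, tau k w = f k].

Definition approx f (h : Omega -> R) :=
  exists g : Vt -> R, measurable_fun [set: Vt] g /\ forall w, Cf f w -> h w = g w.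

Lemma approx_cst f c : approx f (fun _ => c).
Proof. by exists (fun _ => c); split => //; exact: measurable_cst. Qed.

Lemma approx_eqC f c h : (forall w, Cf f w -> h w = c) -> approx f h.
Proof. by move=> H; exists (fun _ => c); split => //; exact: measurable_cst. Qed.

Lemma approx_add f h1 h2 : approx f h1 -> approx f h2 -> approx f (fun w => h1 w + h2 w).
Proof.
move=> [g1 [m1 e1]] [g2 [m2 e2]]; exists (g1 \+ g2); split.
  exact: measurable_funD.
by move=> w Cw /=; rewrite e1 // e2.
Qed.

Lemma approx_mul f h1 h2 : approx f h1 -> approx f h2 -> approx f (fun w => h1 w * h2 w).
Proof.
move=> [g1 [m1 e1]] [g2 [m2 e2]]; exists (g1 \* g2); split.
  exact: measurable_funM.
by move=> w Cw /=; rewrite e1 // e2.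
Qed.

Lemma approx_v f j : approx f (v j).
Proof.
exists (v j : Vt -> R); split => // _ B mB.
apply: sub_gen_smallest; exists j, B; split => //.
by rewrite setTI.
Qed.

Lemma approx_sum f (I : Type) (r : seq I) (Pr : pred I) (F : I -> Omega -> R) :
  (forall i, Pr i -> approx f (F i)) ->
  approx f (fun w => \sum_(i <- r | Pr i) F i w).
Proof.
move=> H; elim: r => [|a r IH].
  by under eq_fun do rewrite big_nil; exact: approx_cst.
under eq_fun do rewrite big_cons.
case: (boolP (Pr a)) => Pa.
  exact: approx_add (H _ Pa) IH.
exact: IH.
Qed.


Lemma lti_last (N D : {poly R}) (w y : nat -> R) (k : nat) : D \is monic -> lti_io N D w y ->
  y k = \sum_(i < (size D).-1) N`_i * sig_ext w (k%:Z - ((size D).-1)%:Z + i%:Z)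
        + N`_((size D).-1) * w k
        - \sum_(i < (size D).-1) D`_i * sig_ext y (k%:Z - ((size D).-1)%:Z + i%:Z).
Proof.
move=> mD H; have := H k.
set n := (size D).-1.
have hs : size D = n.+1.
  by rewrite /n prednK // size_poly_gt0 monic_neq0.
have lc : D`_n = 1 by have := monicP mD; rewrite lead_coefE.
rewrite hs !big_ord_recr /= subrK /= lc mul1r => <-.
by rewrite addrAC subrr add0r.
Qed.


Lemma approx_sub f h1 h2 : approx f h1 -> approx f h2 -> approx f (fun w => h1 w - h2 w).
Proof.
move=> [g1 [m1 e1]] [g2 [m2 e2]]; exists (g1 \- g2); split.
  exact: measurable_funB.
by move=> w Cw /=; rewrite e1 // e2.
Qed.

Lemma approx_ext f (z : nat -> Omega -> R) (k : nat) (t : int) : (t < k%:Z) ->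
  (forall m, (m < k)%N -> approx f (z m)) -> approx f (fun w => sig_ext (fun m => z m w) t).
Proof.
case: t => [m|m] /= hlt H; last exact: approx_cst.
by apply: H; rewrite ltz_nat in hlt.
Qed.

Lemma approx_sumext f (z : nat -> Omega -> R) (k n : nat) (c : nat -> R) :
  (forall m, (m < k)%N -> approx f (z m)) ->
  approx f (fun w => \sum_(i < n) c i * sig_ext (fun m => z m w) (k%:Z - n%:Z + (i : nat)%:Z)).
Proof.
move=> H; apply: approx_sum => i _; apply: approx_mul; first exact: approx_cst.
eapply approx_ext; last exact: H.
have := ltn_ord i; lia.
Qed.

Variables (alpha : nat -> R) (NP DP NK DK : {poly R}) (y u : nat -> Omega -> R).
Hypothesis hP : strictly_proper_tf NP DP.
Hypothesis hK : proper_tf NK DK.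
Hypothesis hplant : forall w, lti_io NP DP
     (fun k => v k w + receiver_out taubar alpha (fun j => tau j w) (fun j => u j w) k)
     (fun k => y k w).
Hypothesis hctrl : forall w, lti_io NK DK (fun k => y k w) (fun k => u k w).

Lemma approx_recv f m : (m < n1)%N -> (forall j, (j <= m)%N -> approx f (u j)) ->
  approx f (fun w => receiver_out taubar alpha (fun j => tau j w) (fun j => u j w) m).
Proof.
move=> hm H; apply: approx_sum => i him.
apply: approx_mul; last by apply: H; exact: leq_subr.
apply: approx_mul; first exact: approx_cst.
have h : (m - i < n1)%N by apply: leq_ltn_trans hm; exact: leq_subr.
apply: (@approx_eqC _ ((nat_of_ord (f (Ordinal h)) == i)%:R)) => w Cw.
by rewrite (Cw (Ordinal h)).
Qed.

Lemma approx_yu f : forall k, (k <= n1)%N -> approx f (y k) /\ approx f (u k).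
Proof.
elim/ltn_ind => k IH hk.
have Hy : approx f (y k).
  have -> : y k = fun w =>
    \sum_(i < (size DP).-1) NP`_i * sig_ext (fun m => v m w + receiver_out taubar alpha (fun j => tau j w) (fun j => u j w) m) (k%:Z - ((size DP).-1)%:Z + i%:Z)
        + NP`_((size DP).-1) * (v k w + receiver_out taubar alpha (fun j => tau j w) (fun j => u j w) k)
        - \sum_(i < (size DP).-1) DP`_i * sig_ext (fun m => y m w) (k%:Z - ((size DP).-1)%:Z + i%:Z).
    apply/funext => w; exact: (@lti_last NP DP _ _ k hP.1 (hplant w)).
  apply: approx_sub; last by apply: approx_sumext => m hmk; case: (IH m hmk (ltnW (leq_trans hmk hk))).
  apply: approx_add.
    apply: approx_sumext => m hmk; apply: approx_add; first exact: approx_v.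
    apply: approx_recv; first exact: leq_trans hmk hk.
    move=> j hj; have hjk : (j < k)%N by exact: leq_ltn_trans hj hmk.
    by case: (IH j hjk (ltnW (leq_trans hjk hk))).
  apply: (@approx_eqC _ 0) => w _.
  have hs : (size NP <= (size DP).-1)%N.
    by have := hP.2; case: (size DP) => // n; rewrite ltnS.
  by rewrite (nth_default _ hs) mul0r.
split => //.
have -> : u k = fun w =>
    \sum_(i < (size DK).-1) NK`_i * sig_ext (fun m => y m w) (k%:Z - ((size DK).-1)%:Z + i%:Z)
        + NK`_((size DK).-1) * y k w
        - \sum_(i < (size DK).-1) DK`_i * sig_ext (fun m => u m w) (k%:Z - ((size DK).-1)%:Z + i%:Z).
  apply/funext => w; exact: (@lti_last NK DK _ _ k hK.1 (hctrl w)).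
apply: approx_sub; last by apply: approx_sumext => m hmk; case: (IH m hmk (ltnW (leq_trans hmk hk))).
apply: approx_add.
  by apply: approx_sumext => m hmk; case: (IH m hmk (ltnW (leq_trans hmk hk))).
by apply: approx_mul => //; exact: approx_cst.
Qed.

End S.



Section T.
Variables (R : realType) (d : measure_display) (Omega : measurableType d).
Variable (P : probability Omega R).

Lemma in_bigsetU (I : eqType) (s : seq I) (Y : I -> set Omega) w :
  (\big[setU/set0]_(i <- s) Y i) w -> exists2 j, j \in s & Y j w.
Proof.
elim: s => [|a s IH]; first by rewrite big_nil.
rewrite big_cons => -[Ya|/IH [j js Yj]]; first by exists a => //; rewrite mem_head.
by exists j => //; rewrite in_cons js orbT.
Qed.

Lemma part_seq (I : eqType) (s : seq I) (Y : I -> set Omega) X :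
  uniq s -> measurable X -> (forall i, measurable (Y i)) ->
  (forall i j, i != j -> Y i `&` Y j = set0) ->
  P (X `&` \big[setU/set0]_(i <- s) Y i) = (\sum_(i <- s) P (X `&` Y i))%E.
Proof.
move=> + mX mY dY; elim: s => [|a s IH]; first by rewrite !big_nil setI0 measure0.
rewrite /= => /andP [nas us].
rewrite !big_cons setIUr measureU; first by congr (_ + _); exact: IH.
- exact: measurableI.
- by apply: measurableI => //; exact: bigsetU_measurable.
apply/seteqP; split => // w [[_ Yaw] [_ /in_bigsetU [j js Yjw]]].
have naj : a != j by apply/eqP => aj; rewrite aj js in nas.
by rewrite -(dY _ _ naj); split.
Qed.

Lemma part_fin (I : finType) (Y : I -> set Omega) X :
  measurable X -> (forall i, measurable (Y i)) ->
  (forall i j, i != j -> Y i `&` Y j = set0) ->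
  (forall w, exists i, Y i w) ->
  P X = (\sum_(i : I) P (X `&` Y i))%E.
Proof.
move=> mX mY dY cY.
rewrite -part_seq //; last exact: index_enum_uniq.
congr (P _); apply/seteqP; split => [w Xw|w []//]; split => //.
have [i Yi] := cY w.
rewrite (bigD1_seq i) ?mem_index_enum ?index_enum_uniq //=.
by left.
Qed.


Variables (taubar n1 : nat) (tau : nat -> Omega -> nat) (v : nat -> Omega -> R) (p : nat -> R).
Hypothesis htau : forall k w, (tau k w <= taubar)%N.
Hypothesis hmt : forall k i, measurable [set w | tau k w = i].
Hypothesis hiid : forall (s : seq nat) (f : nat -> nat), uniq s ->
     (forall k, (f k <= taubar)%N) ->
     P (\bigcap_(k in [set k | k \in s]) [set w | tau k w = f k])
     = (\prod_(k <- s) p (f k))%:E.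

Lemma htau' k w : (tau k w < taubar.+1)%N.
Proof. by rewrite ltnS. Qed.

Let C f := Cf d Omega taubar n1 tau f.
Let T (i : 'I_taubar.+1) := [set w | tau n1 w = i].

Lemma mC f : measurable (C f).
Proof.
have -> : C f = \bigcap_(k in [set: 'I_n1]) [set w | tau k w = f k].
  by apply/seteqP; split => w H k; [move=> _; exact: H | exact: H].
by apply: fin_bigcap_measurable; [exact: finite_finset | move=> k _; exact: hmt].
Qed.

Lemma mT i : measurable (T i).
Proof. exact: hmt. Qed.

Lemma C_disj f g : f != g -> C f `&` C g = set0.
Proof.
move=> nfg; apply/seteqP; split => // w [Cf1 Cg1]; apply: (negP nfg).
apply/eqP/ffunP => k; apply: val_inj; by rewrite /= -(Cf1 k) -(Cg1 k).
Qed.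

Lemma C_cover w : exists f, C f w.
Proof.
by exists [ffun k : 'I_n1 => (Ordinal (htau' k w) : 'I_taubar.+1)] => k; rewrite ffunE.
Qed.

Lemma T_disj i j : i != j -> T i `&` T j = set0.
Proof.
move=> nij; apply/seteqP; split => // w [Ti Tj]; apply: (negP nij).
by apply/eqP; apply: val_inj; rewrite /= -Ti -Tj.
Qed.

Lemma T_cover w : exists i, T i w.
Proof. by exists (Ordinal (htau' n1 w)). Qed.

Let g (f : {ffun 'I_n1 -> 'I_taubar.+1}) (i : 'I_taubar.+1) (k : nat) : nat :=
  if @insub _ _ 'I_n1 k is Some o then nat_of_ord (f o) else nat_of_ord i.

Lemma g_le f i k : (g f i k <= taubar)%N.
Proof. rewrite /g; case: (@insub _ _ 'I_n1 k); last by rewrite -ltnS ltn_ord.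
by move=> o; rewrite -ltnS ltn_ord. Qed.

Lemma bigcap_iota f i m : (m <= n1.+1)%N ->
  \bigcap_(k in [set k | k \in index_iota 0 m]) [set w | tau k w = g f i k]
  = [set w | forall k, (k < m)%N -> tau k w = g f i k].
Proof.
move=> hm; apply/seteqP; split => w H k hk.
  by apply: H; rewrite /= mem_index_iota.
by apply: H; move: hk; rewrite /= mem_index_iota.
Qed.

Lemma g_lt f i (k : 'I_n1) : g f i k = f k.
Proof. by rewrite /g valK. Qed.

Lemma g_n1 f i : g f i n1 = i.
Proof. by rewrite /g insubF // ltnn. Qed.

Lemma C_iota f i : C f = [set w | forall k, (k < n1)%N -> tau k w = g f i k].
Proof.
apply/seteqP; split => w H k.
  by move=> hk; have := H (Ordinal hk); rewrite -(g_lt f i (Ordinal hk)).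
by rewrite (H _ (ltn_ord k)) g_lt.
Qed.

Lemma CT_iota f i : C f `&` T i = [set w | forall k, (k < n1.+1)%N -> tau k w = g f i k].
Proof.
rewrite (C_iota f i); apply/seteqP; split => w.
  move=> [H1 H2] k; rewrite ltnS leq_eqVlt => /orP [/eqP ->|hk]; last exact: H1.
  by rewrite g_n1.
move=> H; split; first by move=> k hk; apply: H; exact: ltnW.
by rewrite /T /= (H n1 (ltnSn _)) g_n1.
Qed.

Lemma T_iota f i : T i = \bigcap_(k in [set k | k \in [:: n1]]) [set w | tau k w = g f i k].
Proof.
apply/seteqP; split => w H.
  by move=> k; rewrite /= mem_seq1 => /eqP ->; rewrite g_n1.
by have := H n1; rewrite /= mem_head g_n1 => /(_ isT).
Qed.

Lemma indepCT f i : P (C f `&` T i) = (P (C f) * P (T i))%E.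
Proof.
rewrite CT_iota -bigcap_iota // hiid ?iota_uniq //; last exact: g_le.
rewrite (C_iota f i) -bigcap_iota // hiid ?iota_uniq //; last exact: g_le.
rewrite (T_iota f i) hiid //; last exact: g_le.
by rewrite big_nat_recr //= big_seq1 g_n1 EFinM.
Qed.


Lemma in_bigsetU2 (I : eqType) (s : seq I) (Y : I -> set Omega) w j :
  j \in s -> Y j w -> (\big[setU/set0]_(i <- s) Y i) w.
Proof.
elim: s => [|a s IH] //; rewrite in_cons big_cons => /orP [/eqP <- Yj|js Yj].
  by left.
by right; exact: IH.
Qed.

Lemma CE_indep f (B : set nat) : measurable (tau n1 @^-1` B) ->
  P (C f `&` tau n1 @^-1` B) = (P (C f) * P (tau n1 @^-1` B))%E.
Proof.
move=> mE.
have mCE : measurable (C f `&` tau n1 @^-1` B) by apply: measurableI => //; exact: mC.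
rewrite (@part_fin _ T _ mCE mT T_disj T_cover).
rewrite [X in (_ * X)%E](@part_fin _ T _ mE mT T_disj T_cover).
rewrite ge0_sume_distrr //; apply: eq_bigr => i _.
case: (pselect (B i)) => Bi.
  have -> : tau n1 @^-1` B `&` T i = T i.
    by apply/seteqP; split => w; [case | move=> Tw; split => //; rewrite /preimage /= Tw].
  have -> : C f `&` tau n1 @^-1` B `&` T i = C f `&` T i.
    apply/seteqP; split => w; first by case=> -[].
    by move=> [Cw Tw]; split => //; split => //; rewrite /preimage /= Tw.
  exact: indepCT.
have -> : tau n1 @^-1` B `&` T i = set0.
  by apply/seteqP; split => // w [Bw Tw]; apply: Bi; rewrite -Tw.
have -> : C f `&` tau n1 @^-1` B `&` T i = set0.
  by apply/seteqP; split => // w [[_ Bw] Tw]; apply: Bi; rewrite -Tw.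
by rewrite measure0 mule0.
Qed.

End T.



Theorem lemma3p3 (R : realType) (d : measure_display) (Omega : measurableType d)
  (P : probability Omega R) (taubar : nat) (htaubar : (1 <= taubar)%N)
  (p : nat -> R) (alpha : nat -> R)
  (NP DP NK DK : {poly R})
  (tau : nat -> Omega -> nat) (v y u : nat -> Omega -> R) :
  strictly_proper_tf NP DP ->
  proper_tf NK DK ->
  (forall i, 0 <= p i) ->
  \sum_(i < taubar.+1) p i = 1 ->
  (* A1 *)
  iid_delays P taubar p tau ->
  (* A2 *)
  (forall k, measurable_fun setT (v k)) ->
  indep_sets P (sigma_rv v) (sigma_rv tau) ->
  (* the closed loop, pathwise *)
  (forall w, lti_io NP DP
     (fun k => v k w + receiver_out taubar alpha (fun j => tau j w) (fun j => u j w) k)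
     (fun k => y k w)) ->
  (forall w, lti_io NK DK (fun k => y k w) (fun k => u k w)) ->
  forall n1 n2 : nat, (n2 <= n1)%N ->
  indep_sets P (sigma_rv (fun _ : unit => tau n1))
               (sigma_rv (fun b : bool => if b then u n1 else u n2)).
Proof.
move=> hP hK hp0 hp1 [htau [hmt hiid]] hv hind hplant hctrl n1 n2 hn.
have svm : forall A, sigma_rv v A -> measurable A.
  apply: smallest_sub; first exact: sigma_algebra_measurable.
  move=> _ [i [B [mB ->]]]; rewrite -[X in measurable X]setTI; exact: hv.
have pre_tau : forall i (B : set nat), tau i @^-1` B = \bigcup_(j in B) [set w | tau i w = j].
  move=> i B; apply/seteqP; split => w /=; first by move=> Bw; exists (tau i w).
  by move=> [j Bj Hj]; rewrite /preimage /= Hj.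
have stm : forall A, sigma_rv tau A -> measurable A.
  apply: smallest_sub; first exact: sigma_algebra_measurable.
  move=> _ [i [B [mB ->]]]; rewrite pre_tau; apply: bigcup_measurable => j _; exact: hmt.
have stCE : forall f B, sigma_rv tau (Cf d Omega taubar n1 tau f `&` tau n1 @^-1` B).
  move=> f B.
  pose Gt := [set E | exists i (B : set nat), measurable B /\ E = tau i @^-1` B].
  suff : @measurable _ (g_sigma_algebraType Gt) (Cf d Omega taubar n1 tau f `&` tau n1 @^-1` B) by [].
  apply: measurableI.
    have -> : Cf d Omega taubar n1 tau f = \bigcap_(k in [set: 'I_n1]) (tau k @^-1` [set nat_of_ord (f k)]).
      by apply/seteqP; split => w H k; [move=> _; exact: H | exact: H].
    apply: fin_bigcap_measurable; first exact: finite_finset.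
    by move=> k _; apply: sub_gen_smallest; exists (nat_of_ord k), [set nat_of_ord (f k)].
  by apply: sub_gen_smallest; exists n1, B.
have sig_tau1 : forall E, sigma_rv (fun _ : unit => tau n1) E -> exists B : set nat, E = tau n1 @^-1` B.
  apply: smallest_sub; last by move=> _ [_ [B [_ ->]]]; exists B.
  split.
  - by exists set0; rewrite preimage_set0.
  - by move=> _ [B ->]; exists (~` B); rewrite setTD preimage_setC.
  - move=> A HA; have [Bs HB] := choice HA.
    exists (\bigcup_k Bs k); rewrite preimage_bigcup.
    by apply: eq_bigcupr => k _; rewrite HB.
have sig_u : forall F, sigma_rv (fun b : bool => if b then u n1 else u n2) F ->
    forall f, exists A, sigma_rv v A /\ F `&` Cf d Omega taubar n1 tau f = A `&` Cf d Omega taubar n1 tau f.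
  pose Gv := [set E | exists i (B : set R), measurable B /\ E = v i @^-1` B].
  apply: smallest_sub; last first.
    move=> _ [b [B [mB ->]]] f.
    have [n [hn' ->]] : exists n, (n <= n1)%N /\ (if b then u n1 else u n2) = u n.
      by case: b; [exists n1 | exists n2].
    have [_ [g [mg eg]]] := @approx_yu R d Omega taubar n1 tau v alpha NP DP NK DK y u hP hK hplant hctrl f n hn'.
    exists (g @^-1` B); split.
      by have := mg measurableT _ mB; rewrite setTI.
    apply/seteqP; split => w [Fw Cw]; split => //.
      by rewrite /preimage /= -eg.
    by rewrite /preimage /= eg.
  split.
  - move=> f; exists set0; split; last by rewrite !set0I.
    exact: (@measurable0 _ (g_sigma_algebraType Gv)).
  - move=> F HF f; have [A [mA eA]] := HF f; exists (setT `\` A); split.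
      have : @measurable _ (g_sigma_algebraType Gv) (setT `\` A).
        by apply: measurableD.
      by [].
    apply/seteqP; split => w [[_ nFw] Cw]; split => //; split => // Aw; apply: nFw.
      by have : (A `&` Cf d Omega taubar n1 tau f) w by []; rewrite -eA; case.
    by have : (F `&` Cf d Omega taubar n1 tau f) w by []; rewrite eA; case.
  - move=> Fs HF f; have [As HA] := choice (fun n => HF n f); exists (\bigcup_n As n); split.
      have : @measurable _ (g_sigma_algebraType Gv) (\bigcup_n As n).
        by apply: bigcupT_measurable => n; exact: (HA n).1.
      by [].
    apply/seteqP; split => w [[n _ Fw] Cw]; split => //.
      have : (Fs n `&` Cf d Omega taubar n1 tau f) w by [].
      by rewrite (HA n).2 => -[Aw _]; exists n.
    have : (As n `&` Cf d Omega taubar n1 tau f) w by [].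
    by rewrite -(HA n).2 => -[Fw' _]; exists n.
move=> E F /sig_tau1 [B ->] /sig_u HF.
have [A HA] := choice HF.
set C := Cf d Omega taubar n1 tau.
have mCf := @mC d Omega taubar n1 tau hmt.
have dC := @C_disj d Omega taubar n1 tau.
have cC := @C_cover d Omega taubar n1 tau htau.
have mE : measurable (tau n1 @^-1` B).
  by rewrite pre_tau; apply: bigcup_measurable => j _; exact: hmt.
have hFC : forall f, F `&` C f = A f `&` C f := fun f => (HA f).2.
have mF : measurable F.
  have -> : F = \big[setU/set0]_(f <- index_enum _) (A f `&` C f).
    apply/seteqP; split => w.
      move=> Fw; have [f Cw] := cC w.
      apply: (@in_bigsetU2 _ _ _ _ _ _ f); first exact: mem_index_enum.
      by rewrite -hFC.
    move=> /in_bigsetU [f _ H].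
    by have [] : (F `&` C f) w by rewrite hFC.
  apply: bigsetU_measurable => f _; apply: measurableI; [exact: svm (HA f).1 | exact: mCf].
have mEF : measurable (tau n1 @^-1` B `&` F) by exact: measurableI.
have sC : forall f, sigma_rv tau (C f).
  by move=> f; have := stCE f setT; rewrite preimage_setT setIT.
have eF : P F = (\sum_f (P (A f) * P (C f)))%E.
  rewrite (@part_fin R d Omega P _ C F mF mCf dC cC); apply: eq_bigr => f _.
  by rewrite hFC; apply: hind; [exact: (HA f).1 | exact: sC].
have eEF : P (tau n1 @^-1` B `&` F) = (\sum_f (P (A f) * P (C f)) * P (tau n1 @^-1` B))%E.
  rewrite (@part_fin R d Omega P _ C _ mEF mCf dC cC); apply: eq_bigr => f _.
  have -> : tau n1 @^-1` B `&` F `&` C f = A f `&` (C f `&` tau n1 @^-1` B).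
    rewrite -setIA hFC; apply/seteqP; split => w.
      by move=> [Bw [Aw Cw]].
    by move=> [Aw [Cw Bw]].
  rewrite hind; [|exact: (HA f).1 | exact: stCE].
  by rewrite (@CE_indep R d Omega P taubar n1 tau p htau hmt hiid f B mE) muleA.
rewrite eEF -ge0_sume_distrl; first by rewrite -eF muleC.
by move=> f _; apply: mule_ge0; exact: measure_ge0.
Qed.
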